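(* Let $\mathbf v=(v_1,\dots,v_m)$ and $\mathbf k=(k_1,\dots,k_m)$ be $m$-tuples of positive integers with $\mathbf v\ge\mathbf k$, and let $t\le m$ be a positive integer with $t\le\sum_i k_i$. Then \[ C(\mathbf v,\mathbf k,t)\ \ge\ \max_{\{i_1,\dots,i_t\}\subseteq\{1,\dots,m\}}\left\lceil\frac{v_{i_1}}{k_{i_1}}\left\lceil\frac{v_{i_2}}{k_{i_2}}\cdots\left\lceil\frac{v_{i_t}}{k_{i_t}}\right\rceil\cdots\right\rceil\right\rceil, \] where the maximum is over all sets of $t$ distinct indices (taken in any order).
   Context: Let $X_1,\dots,X_m$ be pairwise disjoint sets with $|X_i|=v_i$. A block is an $m$-tuple $(B_1,\dots,B_m)$ with $B_i\subseteq X_i$, $|B_i|=k_i$. An $m$-tuple of sets $(T_1,\dots,T_m)$ is $(\mathbf v,\mathbf k,t)$-admissible if $T_i\subseteq X_i$, $|T_i|\le k_i$ for all $i$ and $\sum_i|T_i|=t$; it is contained in a block if $T_i\subseteq B_i$ for all $i$. A generalized covering design ${\rm GC}(\mathbf v,\mathbf k,t)$ is a finite family (repetitions allowed) of blocks containing every admissible tuple in at least one block; $C(\mathbf v,\mathbf k,t)$ is the minimum number of blocks of such a design. *)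

(* Defs.v *)
From mathcomp Require Import all_boot all_order.
Set Implicit Arguments. Unset Strict Implicit. Unset Printing Implicit Defensive.

(* The m pairwise disjoint point sets X_1..X_m are modelled as 'I_(v i),
   i : 'I_m (disjointness is automatic: they live in different types). *)

Definition settuple (m : nat) (v : 'I_m -> nat) :=
  forall i : 'I_m, {set 'I_(v i)}.

Definition is_block m (v k : 'I_m -> nat) (B : settuple v) : Prop :=
  forall i, #|B i| = k i.

Definition admissible m (v k : 'I_m -> nat) (t : nat) (T : settuple v) : Prop :=
  (forall i, #|T i| <= k i) /\ \sum_(i < m) #|T i| = t.

Definition contained_in m (v : 'I_m -> nat) (T B : settuple v) : Prop :=
  forall i, T i \subset B i.

(* A generalized covering design GC(v,k,t) with N blocks (repetitions
   allowed), given as a family D : 'I_N -> blocks. *)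
Definition is_GC m (v k : 'I_m -> nat) (t N : nat) (D : 'I_N -> settuple v) : Prop :=
  (forall j, is_block k (D j)) /\
  (forall T : settuple v, admissible k t T -> exists j, contained_in T (D j)).

Definition ceildiv (a b : nat) : nat := (a + b.-1) %/ b.

Definition nested_ceil m (v k : 'I_m -> nat) (s : seq 'I_m) : nat :=
  foldr (fun i acc => ceildiv (v i * acc) (k i)) 1 s.

(* Main.v *)
Require Import Defs.
From mathcomp Require Import all_boot all_order.
From mathcomp Require Import zify.

Lemma ceildiv_le a b n : 0 < b -> a <= n * b -> ceildiv a b <= n.
Proof.
move=> b0 h; rewrite /ceildiv -ltnS ltn_divLR //.
rewrite mulSn; have : b.-1 < b by rewrite prednK.
lia.
Qed.

Section Key.
Variables (m : nat) (v k : 'I_m -> nat) (N : nat) (D : 'I_N -> settuple v).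
Hypothesis vpos : forall i, 0 < v i.
Hypothesis kpos : forall i, 0 < k i.
Hypothesis Dblock : forall j i, #|D j i| = k i.

Lemma key (s : seq 'I_m) : uniq s -> forall J : {set 'I_N},
  (forall x : (forall l, 'I_(v l)), exists2 j, j \in J & forall l, l \in s -> x l \in D j l) ->
  nested_ceil v k s <= #|J|.
Proof.
elim: s => [|i s IH] /=.
  move=> _ J cov.
  have [j jJ _] := cov (fun l => Ordinal (vpos l)).
  by rewrite card_gt0; apply/set0Pn; exists j.
case/andP=> nis us J cov.
set c := nested_ceil v k s.
have Jp : forall p : 'I_(v i), c <= #|[set j in J | p \in D j i]|.
  move=> p; apply: IH => // x.
  pose x' := fun l => if l == i then insubd (x l) (val p) else x l.
  have [j jJ hj] := cov x'.
  exists j.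
    rewrite inE jJ /=.
    have := hj i (mem_head _ _); rewrite /x' eqxx.
    suff -> : insubd (x i) (val p) = p by [].
    by apply: val_inj; rewrite val_insubd ltn_ord.
  move=> l ls; have := hj l; rewrite inE ls orbT => /(_ isT).
  rewrite /x'; case: eqP => // eli; subst l; by rewrite ls in nis.
apply: ceildiv_le => //.
have e1 : \sum_(p : 'I_(v i)) #|[set j in J | p \in D j i]| = #|J| * k i.
  transitivity (\sum_(p : 'I_(v i)) \sum_(j in J) (p \in D j i : nat)).
    apply: eq_bigr => p _; rewrite -sum1_card big_mkcond /= [RHS]big_mkcond /=.
    apply: eq_bigr => j _; rewrite inE; by case: (j \in J); case: (p \in D j i).
  rewrite exchange_big /= -sum1_card big_distrl /=.
  apply: eq_bigr => j _; rewrite mul1n -(Dblock j i) -sum1_card [RHS]big_mkcond /=.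
  by apply: eq_bigr => p _; case: (p \in D j i).
have e2 : \sum_(p : 'I_(v i)) c = v i * c by rewrite sum_nat_const card_ord.
rewrite -e1 -e2; exact: leq_sum.
Qed.
End Key.

Theorem corollary5p2 (m : nat) (v k : 'I_m -> nat) (t : nat) :
  (forall i, 0 < v i) -> (forall i, 0 < k i) -> (forall i, k i <= v i) ->
  0 < t -> t <= m -> t <= \sum_(i < m) k i ->
  forall (N : nat) (D : 'I_N -> settuple v), is_GC k t D ->
  forall s : seq 'I_m, uniq s -> size s = t ->
  nested_ceil v k s <= N.
Proof.
move=> vpos kpos _ _ _ _ N D [Db cov] s us st.
rewrite -(card_ord N) -cardsT.
apply: (@key m v k N D vpos kpos Db s us) => x.
pose T : settuple v := fun l => if l \in s then [set x l] else set0.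
have [|j hj] := cov T.
  split.
    move=> i; rewrite /T; case: (i \in s); rewrite ?cards1 ?cards0 //.
  rewrite -st -(card_uniqP us).
  rewrite -sum1_card [RHS]big_mkcond /=.
  apply: eq_bigr => i _; rewrite /T; case: (i \in s); by rewrite ?cards1 ?cards0.
exists j; first by rewrite inE.
move=> l ls; have := hj l; rewrite /T ls sub1set; done.
Qed.
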